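(* Suppose the set of extreme points of $\mathrm{New}(A)$ is affinely independent, and that $c\in\mathbb{R}^m$ satisfies $c_i\le 0$ whenever $a_i$ is nonextremal. Then $c\in C_{\mathrm{SAGE}}(A)$ if and only if $c\in C_{\mathrm{NNS}}(A)$.
   Context: Let $A\in\mathbb{R}^{n\times m}$ have distinct columns $a_1,\dots,a_m$. For $c\in\mathbb{R}^m$, $\mathrm{Sig}(A,c)$ denotes the function $x\mapsto\sum_{i=1}^m c_i\exp(a_i^\top x)$ on $\mathbb{R}^n$. $\mathrm{New}(A)=\mathrm{conv}\{a_1,\dots,a_m\}$ is the Newton polytope; $a_i$ is called extremal if it is an extreme point of $\mathrm{New}(A)$ and nonextremal otherwise. $C_{\mathrm{NNS}}(A)=\{c\in\mathbb{R}^m:\mathrm{Sig}(A,c)(x)\ge 0\ \forall x\in\mathbb{R}^n\}$. For $k\in[m]$, the $k$-th AGE cone is $C_{\mathrm{AGE}}(A,k)=\{c\in C_{\mathrm{NNS}}(A): c_i\ge 0\ \forall i\ne k\}$, and the SAGE cone is the Minkowski sum $C_{\mathrm{SAGE}}(A)=\sum_{k=1}^m C_{\mathrm{AGE}}(A,k)$. *)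

(* Defs.v *)
From Stdlib Require Import Reals Lra Lia.
Open Scope R_scope.

(* Vectors in R^d are represented by functions nat -> R, only the
   coordinates 0..d-1 being relevant. The matrix A in R^{n x m} is
   given by its columns a : nat -> (nat -> R), a i = a_i (i < m). *)

Fixpoint sumR (d : nat) (f : nat -> R) : R :=
  match d with
  | O => 0
  | S d' => sumR d' f + f d'
  end.

Definition dot (n : nat) (u x : nat -> R) : R := sumR n (fun k => u k * x k).

Definition vec_eq (n : nat) (u v : nat -> R) : Prop := forall k, (k < n)%nat -> u k = v k.

Definition distinct_cols (n m : nat) (a : nat -> nat -> R) : Prop :=
  forall i j, (i < m)%nat -> (j < m)%nat -> i <> j -> ~ vec_eq n (a i) (a j).

Definition Sig (n m : nat) (a : nat -> nat -> R) (c : nat -> R) (x : nat -> R) : R :=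
  sumR m (fun i => c i * exp (dot n (a i) x)).

Definition New (n m : nat) (a : nat -> nat -> R) (p : nat -> R) : Prop :=
  exists lam : nat -> R,
    (forall i, (i < m)%nat -> 0 <= lam i) /\
    sumR m lam = 1 /\
    vec_eq n p (fun k => sumR m (fun i => lam i * a i k)).

Definition is_extreme_point (n : nat) (S : (nat -> R) -> Prop) (p : nat -> R) : Prop :=
  S p /\
  forall y z t, S y -> S z -> 0 < t < 1 ->
    vec_eq n p (fun k => t * y k + (1 - t) * z k) ->
    vec_eq n y p /\ vec_eq n z p.

Definition extremal (n m : nat) (a : nat -> nat -> R) (i : nat) : Prop :=
  is_extreme_point n (New n m a) (a i).

(* the set {a_i : a_i extremal} is affinely independent
   (columns are distinct, so this set is indexed by the extremal i) *)
Definition extreme_pts_aff_indep (n m : nat) (a : nat -> nat -> R) : Prop :=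
  forall mu : nat -> R,
    (forall i, (i < m)%nat -> ~ extremal n m a i -> mu i = 0) ->
    sumR m mu = 0 ->
    (forall k, (k < n)%nat -> sumR m (fun i => mu i * a i k) = 0) ->
    forall i, (i < m)%nat -> mu i = 0.

Definition C_NNS (n m : nat) (a : nat -> nat -> R) (c : nat -> R) : Prop :=
  forall x : nat -> R, 0 <= Sig n m a c x.

Definition C_AGE (n m : nat) (a : nat -> nat -> R) (k : nat) (c : nat -> R) : Prop :=
  C_NNS n m a c /\ forall i, (i < m)%nat -> i <> k -> 0 <= c i.

Definition C_SAGE (n m : nat) (a : nat -> nat -> R) (c : nat -> R) : Prop :=
  exists cs : nat -> nat -> R,
    (forall k, (k < m)%nat -> C_AGE n m a k (cs k)) /\
    forall i, (i < m)%nat -> c i = sumR m (fun k => cs k i).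

(* Main.v *)
Require Import Defs.
From Stdlib Require Import Reals Lra Lia Classical ClassicalEpsilon Bool.
From HB Require Import structures.
From mathcomp Require all_ssreflect ssralg ssrnum matrix Rstruct Rstruct_topology classical_sets set_interval interval boolp topology normedtype derive matrix_normedtype.
Open Scope R_scope.

Lemma sumR_ext d f g : (forall i, (i < d)%nat -> f i = g i) -> sumR d f = sumR d g.
Proof. induction d; intros H; simpl; auto. rewrite IHd by (intros; apply H; lia). rewrite H by lia. auto. Qed.

Lemma sumR_plus d f g : sumR d (fun i => f i + g i) = sumR d f + sumR d g.
Proof. induction d; simpl; [lra| rewrite IHd; lra]. Qed.

Lemma sumR_minus d f g : sumR d (fun i => f i - g i) = sumR d f - sumR d g.
Proof. induction d; simpl; [lra| rewrite IHd; lra]. Qed.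

Lemma sumR_scal d k f : sumR d (fun i => k * f i) = k * sumR d f.
Proof. induction d; simpl; [lra| rewrite IHd; lra]. Qed.

Lemma sumR_scal_r d k f : sumR d (fun i => f i * k) = sumR d f * k.
Proof. induction d; simpl; [lra| rewrite IHd; lra]. Qed.

Lemma sumR_le d f g : (forall i, (i < d)%nat -> f i <= g i) -> sumR d f <= sumR d g.
Proof. induction d; intros H; simpl; [lra|]. assert (H1 := H d ltac:(lia)). assert (sumR d f <= sumR d g) by (apply IHd; intros; apply H; lia). lra. Qed.

Lemma sumR_nonneg d f : (forall i, (i < d)%nat -> 0 <= f i) -> 0 <= sumR d f.
Proof. intros H. replace 0 with (sumR d (fun _ => 0)). apply sumR_le; auto. induction d; simpl; auto. rewrite IHd; [lra| intros; apply H; lia]. Qed.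

Lemma sumR_zero d f : (forall i, (i < d)%nat -> f i = 0) -> sumR d f = 0.
Proof. induction d; intros H; simpl; auto. rewrite IHd by (intros; apply H; lia). rewrite H by lia. lra. Qed.

Lemma sumR_term_le d f k : (forall i, (i < d)%nat -> 0 <= f i) -> (k < d)%nat -> f k <= sumR d f.
Proof. induction d; intros H Hk; simpl; [lia|].
  assert (0 <= sumR d f) by (apply sumR_nonneg; intros; apply H; lia).
  destruct (Nat.eq_dec k d) as [->|Hne]; [lra|].
  assert (f k <= sumR d f) by (apply IHd; [intros; apply H; lia| lia]).
  assert (0 <= f d) by (apply H; lia). lra. Qed.

Lemma sumR_pos d f k : (forall i, (i < d)%nat -> 0 <= f i) -> (k < d)%nat -> 0 < f k -> 0 < sumR d f.
Proof. intros H Hk Hp. assert (f k <= sumR d f) by (apply sumR_term_le; auto). lra. Qed.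

Lemma sumR_point d k A : (k < d)%nat -> sumR d (fun i => if Nat.eq_dec i k then A else 0) = A.
Proof. induction d; intros Hk; simpl; [lia|].
  destruct (Nat.eq_dec d k) as [->|Hne].
  - rewrite sumR_zero. lra. intros i Hi. destruct (Nat.eq_dec i k); [lia|auto].
  - rewrite IHd by lia. lra. Qed.

Lemma sumR_point_out d k A : (d <= k)%nat -> sumR d (fun i => if Nat.eq_dec i k then A else 0) = 0.
Proof. intros Hk. apply sumR_zero. intros i Hi. destruct (Nat.eq_dec i k); [lia|auto]. Qed.

Lemma sumR_swap m d F : sumR m (fun k => sumR d (fun i => F k i)) = sumR d (fun i => sumR m (fun k => F k i)).
Proof. induction m; simpl. - rewrite sumR_zero; auto. - rewrite IHm. rewrite <- sumR_plus. auto. Qed.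

Lemma sumR_update d f g k : (k < d)%nat -> (forall i, (i < d)%nat -> i <> k -> f i = g i) ->
  sumR d g = sumR d f + (g k - f k).
Proof. intros Hk H. rewrite <- (sumR_point d k (g k - f k) Hk). rewrite <- sumR_plus.
  apply sumR_ext. intros i Hi. destruct (Nat.eq_dec i k) as [->|Hne]; [lra|]. rewrite H; auto; lra. Qed.

Fixpoint prodR (d : nat) (f : nat -> R) : R :=
  match d with O => 1 | S d' => prodR d' f * f d' end.

Lemma prodR_ext d f g : (forall i, (i < d)%nat -> f i = g i) -> prodR d f = prodR d g.
Proof. induction d; intros H; simpl; auto. rewrite IHd by (intros; apply H; lia). rewrite H by lia. auto. Qed.

Lemma prodR_nonneg d f : (forall i, (i < d)%nat -> 0 <= f i) -> 0 <= prodR d f.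
Proof. induction d; intros H; simpl; [lra|]. apply Rmult_le_pos; [apply IHd; intros; apply H; lia| apply H; lia]. Qed.

Lemma prodR_exp d f g : (forall i, (i < d)%nat -> f i = exp (g i)) -> prodR d f = exp (sumR d g).
Proof. induction d; intros H; simpl. - rewrite exp_0; auto.
  - rewrite IHd by (intros; apply H; lia). rewrite H by lia. rewrite exp_plus. auto. Qed.

Lemma prodR_zero d f k : (k < d)%nat -> f k = 0 -> prodR d f = 0.
Proof. induction d; intros Hk H0; simpl; [lia|]. destruct (Nat.eq_dec k d) as [->|Hne].
  - rewrite H0; lra. - rewrite IHd; [lra|lia|auto]. Qed.

Lemma prodR_mono d f g : (forall i, (i < d)%nat -> 0 <= f i <= g i) -> prodR d f <= prodR d g.
Proof. induction d; intros H; simpl; [lra|].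
  assert (0 <= prodR d f) by (apply prodR_nonneg; intros; apply H; lia).
  assert (prodR d f <= prodR d g) by (apply IHd; intros; apply H; lia).
  destruct (H d ltac:(lia)). apply Rmult_le_compat; auto. Qed.

Definition pw (s l : R) : R :=
  if Req_EM_T l 0 then 1 else if Rle_dec s 0 then 0 else exp (l * ln s).

Lemma pw_nonneg s l : 0 <= pw s l.
Proof. unfold pw. destruct (Req_EM_T l 0); [lra|]. destruct (Rle_dec s 0); [lra|]. left; apply exp_pos. Qed.

Lemma pw_pos s l : 0 < s -> pw s l = exp (l * ln s).
Proof. intros Hs. unfold pw. destruct (Req_EM_T l 0) as [->|]. - rewrite Rmult_0_l, exp_0; auto.
  - destruct (Rle_dec s 0); [lra|auto]. Qed.

Lemma pw_zero s l : l <> 0 -> s <= 0 -> pw s l = 0.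
Proof. intros Hl Hs. unfold pw. destruct (Req_EM_T l 0); [lra|]. destruct (Rle_dec s 0); [auto|lra]. Qed.

Lemma pw_mono s t l : 0 <= l -> 0 <= s <= t -> pw s l <= pw t l.
Proof. intros Hl Hst. destruct (Req_EM_T l 0) as [->|Hl0].
  - unfold pw. destruct (Req_EM_T 0 0); [lra|congruence].
  - destruct (Rle_dec s 0). + rewrite (pw_zero s l) by auto. apply pw_nonneg.
    + rewrite !pw_pos by lra. destruct (Req_dec s t) as [->|]; [lra|].
      left. apply exp_increasing. apply Rmult_lt_compat_l; [lra|]. apply ln_increasing; lra. Qed.

Lemma pw_cont l x : 0 <= l -> continuity_pt (fun s => pw s l) x.
Proof.
  intros Hl. destruct (Req_EM_T l 0) as [->|Hl0].
  { apply continuity_pt_locally_ext with (f := fun _ => 1) (a := 1); [lra| |apply continuity_pt_const; intros ? ?; auto].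
    intros y _. unfold pw. destruct (Req_EM_T 0 0); [auto|congruence]. }
  destruct (Rlt_le_dec 0 x) as [Hx|Hx].
  { apply continuity_pt_locally_ext with (f := fun s => exp (l * ln s)) (a := x).
    - auto.
    - intros y Hy. unfold Rdist in Hy. apply Rabs_def2 in Hy. rewrite pw_pos by lra. auto.
    - apply (continuity_pt_comp (fun s => l * ln s) exp).
      + apply continuity_pt_mult. apply continuity_pt_const; intros ? ?; auto.
        apply derivable_continuous_pt. exists (/ x). apply derivable_pt_lim_ln; auto.
      + apply derivable_continuous_pt. apply derivable_pt_exp. }
  destruct (Rlt_le_dec x 0) as [Hx'|Hx'].
  { apply continuity_pt_locally_ext with (f := fun _ => 0) (a := - x); [lra| |apply continuity_pt_const; intros ? ?; auto].
    intros y Hy. unfold Rdist in Hy. apply Rabs_def2 in Hy. rewrite pw_zero by lra. auto. }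
  assert (x = 0) by lra. subst x.
  intros eps Heps. exists (exp (ln eps / l)). split; [apply exp_pos|].
  intros y [_ Hy]. unfold R_dist, dist in *. simpl in *. unfold R_dist in *.
  rewrite (pw_zero 0 l Hl0 (Rle_refl 0)). rewrite Rminus_0_r.
  destruct (Rle_dec y 0) as [Hy0|Hy0].
  - rewrite pw_zero by auto. rewrite Rabs_R0. auto.
  - rewrite pw_pos by lra. rewrite Rabs_pos_eq by (left; apply exp_pos).
    rewrite Rminus_0_r, Rabs_pos_eq in Hy by lra.
    assert (Hl' : 0 < l) by lra.
    assert (ln y < ln eps / l). { rewrite <- (ln_exp (ln eps / l)). apply ln_increasing; lra. }
    rewrite <- (exp_ln eps) by auto. apply exp_increasing.
    apply (Rmult_lt_compat_l l) in H; auto. replace (l * (ln eps / l)) with (ln eps) in H by (field; lra). lra.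
Qed.

Definition Gt (m : nat) (l z : nat -> R) : R := prodR m (fun i => pw (z i) (l i)).
Definition hfun (m : nat) (c d : nat -> R) (lam : nat -> nat -> R) (z : nat -> R) : R :=
  sumR m (fun i => c i * z i) - sumR m (fun j => d j * Gt m (lam j) z).
Definition inD (m : nat) (Q : nat -> bool) (z : nat -> R) : Prop :=
  (forall i, (i < m)%nat -> 0 <= z i) /\ (forall i, (i < m)%nat -> Q i = false -> z i = 0) /\ sumR m z = 1.

Lemma Gt_ext m l z z' : (forall i, (i < m)%nat -> z i = z' i) -> Gt m l z = Gt m l z'.
Proof. intros H. unfold Gt. apply prodR_ext. intros i Hi. rewrite H; auto. Qed.

Lemma hfun_ext m c d lam z z' : (forall i, (i < m)%nat -> z i = z' i) -> hfun m c d lam z = hfun m c d lam z'.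
Proof. intros H. unfold hfun. f_equal. apply sumR_ext; intros i Hi; rewrite H; auto.
  apply sumR_ext; intros j Hj. rewrite (Gt_ext m (lam j) z z'); auto. Qed.

Lemma inD_ext m Q z z' : (forall i, (i < m)%nat -> z i = z' i) -> inD m Q z -> inD m Q z'.
Proof. intros H [H1 [H2 H3]]. split; [|split].
  - intros i Hi. rewrite <- H; auto.
  - intros i Hi HQ. rewrite <- H; auto.
  - rewrite <- H3. symmetry. apply sumR_ext; auto. Qed.

Lemma inD_le1 m Q z i : inD m Q z -> (i < m)%nat -> 0 <= z i <= 1.
Proof. intros [H1 [H2 H3]] Hi. split; auto. rewrite <- H3. apply sumR_term_le; auto. Qed.

Definition ind_at (k i : nat) : R := if Nat.eq_dec i k then 1 else 0.

Lemma inD_ind m Q i0 : (i0 < m)%nat -> Q i0 = true -> inD m Q (ind_at i0).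
Proof. intros Hi HQ. unfold ind_at. split; [|split].
  - intros i _. destruct (Nat.eq_dec i i0); lra.
  - intros i _ HQi. destruct (Nat.eq_dec i i0); [subst; congruence|auto].
  - apply sumR_point; auto. Qed.

Module EVT.
Import all_ssreflect ssralg ssrnum matrix Rstruct Rstruct_topology classical_sets set_interval interval boolp topology normedtype derive matrix_normedtype.
Import Order.TTheory GRing.Theory Num.Theory.
Import numFieldNormedType.Exports.
Local Open Scope classical_set_scope.

Definition vnat (m : nat) (v : 'rV[R]_m) (i : nat) : R :=
  if insub i is Some o then v ord0 o else 0%R.

Arguments vnat {m}.
Lemma vnat_cont m i : continuous (fun v : 'rV[R]_m => vnat v i).
Proof.
rewrite /vnat. case: (insub i) => [o|]; last exact: cst_continuous.
exact: coord_continuous.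
Qed.

Lemma cont_sumR m d (F : nat -> 'rV[R]_m -> R) : (forall i, continuous (F i)) ->
  continuous (fun v => sumR d (fun i => F i v)).
Proof.
move=> HF; elim: d => [|d IH] /=; first exact: cst_continuous.
move=> x. exact: (@continuousD R R^o _ _ _ x (IH x) (HF d x)).
Qed.

Lemma cont_prodR m d (F : nat -> 'rV[R]_m -> R) : (forall i, continuous (F i)) ->
  continuous (fun v => prodR d (fun i => F i v)).
Proof.
move=> HF; elim: d => [|d IH] /=; first exact: cst_continuous.
move=> x. exact: (@continuousM R _ _ _ x (IH x) (HF d x)).
Qed.

Lemma cont_mulc m k (f : 'rV[R]_m -> R) : continuous f -> continuous (fun v => k * f v).
Proof. move=> Hf x. exact: (@continuousM R _ _ _ x (@cst_continuous _ _ k x) (Hf x)). Qed.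

Lemma cont_sub m (f g : 'rV[R]_m -> R) : continuous f -> continuous g -> continuous (fun v => f v - g v).
Proof. move=> Hf Hg x. exact: (@continuousB R R^o _ _ _ x (Hf x) (Hg x)). Qed.

Lemma cont_pw m l (f : 'rV[R]_m -> R) : Rle 0 l -> continuous f -> continuous (fun v => pw (f v) l).
Proof.
move=> Hl Hf x. apply: (@continuous_comp _ _ _ f (fun s => pw s l)); first exact: Hf.
apply/continuity_pt_cvg. exact: pw_cont.
Qed.

Lemma vnat_ord m (v : 'rV[R]_m) (i : 'I_m) : vnat v (nat_of_ord i) = v ord0 i.
Proof. by rewrite /vnat valK. Qed.

Lemma vnat_row m (f : nat -> R) i : (i < m)%N -> vnat (\row_(j < m) f (nat_of_ord j)) i = f i.
Proof. move=> Hi. by rewrite /vnat insubT mxE. Qed.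

Lemma vnat_out m (v : 'rV[R]_m) i : ~ (i < m)%coq_nat -> vnat v i = 0%R.
Proof. move=> Hi. rewrite /vnat insubF //. apply/negbTE/negP => /ssrnat.ltP. done. Qed.

Lemma hfun_cont m c d lam : (forall j i, Rle 0 (lam j i)) ->
  continuous (fun v : 'rV[R]_m => hfun m c d lam (vnat v)).
Proof.
move=> Hl. rewrite /hfun. apply: cont_sub.
  apply: cont_sumR => i. apply: cont_mulc. exact: vnat_cont.
apply: cont_sumR => j. apply: cont_mulc. rewrite /Gt. apply: cont_prodR => i.
apply: cont_pw => //. exact: vnat_cont.
Qed.

Lemma closed_Rle (m : nat) (g : 'rV[R]_m -> R) : continuous g -> closed [set v | Rle 0 (g v)].
Proof.
move=> Hg. have -> : [set v | Rle 0 (g v)] = g @^-1` [set x : R | (0 <= x)%R].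
  by rewrite predeqE => v; split => /= /RleP.
by move: Hg => /continuous_closedP; apply; apply: closed_ge.
Qed.

Lemma closed_Req (m : nat) (g : 'rV[R]_m -> R) (k : R) : continuous g -> closed [set v | g v = k].
Proof.
move=> Hg. have -> : [set v | g v = k] = g @^-1` [set x : R | x = k] by [].
by move: Hg => /continuous_closedP; apply; apply: closed_eq.
Qed.

Lemma evt_rv m c d lam (Q : nat -> bool) i0 : (forall j i, Rle 0 (lam j i)) -> (i0 < m)%coq_nat -> Q i0 = true ->
  exists w, inD m Q w /\ forall z, inD m Q z -> Rle (hfun m c d lam w) (hfun m c d lam z).
Proof.
move=> Hl Hi0 HQ0.
pose D := [set v : 'rV[R]_m | inD m Q (vnat v)].
have Deq : D = \bigcap_(i in [set: nat]) [set v | Rle 0 (vnat v i)] `&`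
    \bigcap_(i in [set: nat]) (if Q i then setT else [set v | vnat v i = 0%R]) `&`
    [set v | sumR m (vnat v) = 1%R].
  rewrite predeqE => v; split.
  - move=> [H1 [H2 H3]]; split; [split|] => //.
    + move=> i _ /=. case: (@ssrnat.ltP i m) => Hi; first exact: H1.
      by rewrite vnat_out //; apply: Rle_refl.
    + move=> i _ /=. case HQ: (Q i) => //=. case: (@ssrnat.ltP i m) => Hi; first exact: H2.
      by rewrite vnat_out.
  - move=> [[H1 H2] H3]; split; [|split] => //.
    + by move=> i _; apply: (H1 i).
    + move=> i _ HQ. by have := H2 i I; rewrite HQ.
have Dcl : closed D.
  rewrite Deq. apply: closedI; [apply: closedI|].
  - apply: closed_bigI => i _. apply: closed_Rle. exact: vnat_cont.
  - apply: closed_bigI => i _. case: (Q i); first exact: closedT.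
    apply: closed_Req. exact: vnat_cont.
  - apply: closed_Req. apply: cont_sumR => i. exact: vnat_cont.
have Dcomp : compact D.
  have Sc : compact (`[0%R, 1%R]%classic : set R) by apply: segment_compact.
  have Cc := @rV_compact R m (fun _ => `[0%R, 1%R]%classic) (fun _ => Sc).
  apply: (subclosed_compact Dcl Cc).
  move=> v Dv i /=. rewrite -vnat_ord. have [H1 H2] := @inD_le1 m Q (vnat v) i Dv (ssrnat.ltP (ltn_ord i)).
  by rewrite in_itv /=; apply/andP; split; apply/RleP.
have Dne : D !=set0.
  exists ((\row_(j < m) ind_at i0 (nat_of_ord j))%R : 'rV[R]_m).
  rewrite /D /=. apply: (@inD_ext m Q (ind_at i0)); last exact: inD_ind.
  move=> i Hi. rewrite /vnat insubT; first exact/ssrnat.ltP. move=> Hi2. by rewrite mxE.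
have [v Dv Hmin] := compact_EVT_min Dne Dcomp (continuous_subspaceT (@hfun_cont m c d lam Hl)).
move: Dv; rewrite inE => Dv.
exists (vnat v); split => // z Hz.
pose vz := ((\row_(j < m) z (nat_of_ord j))%R : 'rV[R]_m).
have Hvz : forall i, (i < m)%coq_nat -> vnat vz i = z i by move=> i Hi; rewrite vnat_row //; exact/ssrnat.ltP.
have Dvz : D vz by apply: (@inD_ext m Q z) => // i Hi; rewrite Hvz.
rewrite (@hfun_ext m c d lam z (vnat vz)); last by move=> i Hi; rewrite Hvz.
apply/RleP. apply: Hmin. by rewrite inE.
Qed.

End EVT.

Definition ind (b : bool) : R := if b then 1 else 0.

Lemma exp_tangent a x : exp a * (1 + x - a) <= exp x.
Proof.
  destruct (Req_dec x a) as [->|Hne]. { replace (1 + a - a) with 1 by ring. lra. }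
  assert (H := exp_ineq1 (x - a) ltac:(lra)).
  replace (exp x) with (exp a * exp (x - a)) by (rewrite <- exp_plus; f_equal; ring).
  left. apply Rmult_lt_compat_l; [apply exp_pos| lra].
Qed.

Lemma ln_le_sub1 z : 0 < z -> ln z <= z - 1.
Proof. intros Hz. assert (H := exp_tangent 0 (ln z)). rewrite exp_0, exp_ln in H by auto. lra. Qed.

Lemma ln_ratio w t : 0 < w -> 0 < t -> t / (w + t) <= ln (w + t) - ln w.
Proof.
  intros Hw Ht. assert (H := ln_le_sub1 (w / (w + t)) ltac:(apply Rdiv_lt_0_compat; lra)).
  unfold Rdiv in H. rewrite ln_mult, ln_Rinv in H by (try apply Rinv_0_lt_compat; lra).
  replace (w * / (w + t) - 1) with (- (t / (w + t))) in H by (field; lra). lra.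
Qed.

Lemma Gt_pos_form m l z : (forall i, (i < m)%nat -> l i <> 0 -> 0 < z i) ->
  Gt m l z = exp (sumR m (fun i => l i * ln (z i))).
Proof.
  intros H. unfold Gt. apply prodR_exp. intros i Hi. destruct (Req_EM_T (l i) 0) as [E|E].
  - rewrite E, Rmult_0_l, exp_0. unfold pw. destruct (Req_EM_T 0 0); [auto|congruence].
  - rewrite pw_pos; auto.
Qed.

Lemma Gt_zero_form m l z i : (i < m)%nat -> l i <> 0 -> z i <= 0 -> Gt m l z = 0.
Proof. intros Hi Hl Hz. unfold Gt. apply (prodR_zero m _ i Hi). apply pw_zero; auto. Qed.

Lemma Gt_nonneg m l z : 0 <= Gt m l z.
Proof. unfold Gt. apply prodR_nonneg. intros; apply pw_nonneg. Qed.

Lemma Gt_mono m l z u : (forall i, 0 <= l i) -> (forall i, (i < m)%nat -> 0 <= z i <= u i) -> Gt m l z <= Gt m l u.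
Proof. intros Hl H. unfold Gt. apply prodR_mono. intros i Hi. split; [apply pw_nonneg|]. apply pw_mono; auto. Qed.

Lemma Gt_hom m l z al : sumR m l = 1 -> 0 < al -> (forall i, (i < m)%nat -> 0 <= z i) ->
  Gt m l (fun i => al * z i) = al * Gt m l z.
Proof.
  intros Hs Ha Hz.
  destruct (classic (forall i, (i < m)%nat -> l i <> 0 -> 0 < z i)) as [Hp|Hn].
  - rewrite (Gt_pos_form m l z Hp).
    assert (Hp2 : forall i, (i < m)%nat -> l i <> 0 -> 0 < al * z i).
    { intros i Hi Hl. apply Rmult_lt_0_compat; auto. }
    rewrite (Gt_pos_form m l _ Hp2).
    rewrite (sumR_ext m _ (fun i => ln al * l i + l i * ln (z i))).
    + rewrite sumR_plus, sumR_scal, Hs, Rmult_1_r, exp_plus, exp_ln; auto.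
    + intros i Hi. destruct (Req_EM_T (l i) 0) as [E|E]. { rewrite E. ring. }
      rewrite ln_mult; [ring|auto|apply Hp; auto].
  - apply not_all_ex_not in Hn. destruct Hn as [i Hi].
    apply imply_to_and in Hi. destruct Hi as [Him Hi]. apply imply_to_and in Hi. destruct Hi as [Hl Hi].
    rewrite (Gt_zero_form m l z i), (Gt_zero_form m l _ i); auto; try lra.
    assert (z i = 0) by (assert (H := Hz i Him); lra). rewrite H. lra.
Qed.



Lemma hfun_hom m c d lam z al : (forall j, (j < m)%nat -> sumR m (lam j) = 1) -> 0 < al ->
  (forall i, (i < m)%nat -> 0 <= z i) -> hfun m c d lam (fun i => al * z i) = al * hfun m c d lam z.
Proof.
  intros Hs Ha Hz. unfold hfun. rewrite Rmult_minus_distr_l, <- !sumR_scal. f_equal.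
  - apply sumR_ext; intros; ring.
  - apply sumR_ext; intros j Hj. rewrite Gt_hom; auto. ring.
Qed.

Lemma hfun_diff_eq m c d lam z u :
  hfun m c d lam u - hfun m c d lam z =
  sumR m (fun i => c i * (u i - z i)) - sumR m (fun j => d j * (Gt m (lam j) u - Gt m (lam j) z)).
Proof.
  unfold hfun. rewrite (sumR_ext m (fun i => c i * (u i - z i)) (fun i => c i * u i - c i * z i)) by (intros; ring).
  rewrite (sumR_ext m (fun j => d j * (Gt m (lam j) u - Gt m (lam j) z)) (fun j => d j * Gt m (lam j) u - d j * Gt m (lam j) z)) by (intros; ring).
  rewrite !sumR_minus. ring.
Qed.

Lemma hfun_diff_le m c d lam z u : (forall j i, 0 <= lam j i) -> (forall j, 0 <= d j) ->
  (forall i, (i < m)%nat -> 0 <= z i <= u i) ->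
  hfun m c d lam u - hfun m c d lam z <= sumR m (fun i => c i * (u i - z i)).
Proof.
  intros Hl Hd H. rewrite hfun_diff_eq.
  assert (0 <= sumR m (fun j => d j * (Gt m (lam j) u - Gt m (lam j) z))); [|lra].
  apply sumR_nonneg. intros j Hj. apply Rmult_le_pos; auto.
  assert (Gt m (lam j) z <= Gt m (lam j) u) by (apply Gt_mono; auto). lra.
Qed.

Lemma hnn_closed m (Q0 : nat -> bool) c d lam :
  (forall j i, 0 <= lam j i) -> (forall j, 0 <= d j) ->
  (forall z, (forall i, (i < m)%nat -> Q0 i = true -> 0 < z i) -> (forall i, (i < m)%nat -> Q0 i = false -> z i = 0) -> 0 <= hfun m c d lam z) ->
  forall z, (forall i, (i < m)%nat -> 0 <= z i) -> (forall i, (i < m)%nat -> Q0 i = false -> z i = 0) -> 0 <= hfun m c d lam z.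
Proof.
  intros Hl Hd Hnn z Hz0 Hzq. destruct (Rle_dec 0 (hfun m c d lam z)) as [|Hneg]; auto. exfalso.
  set (C := sumR m (fun i => Rabs (c i)) + 1).
  assert (HC : 0 < C). { unfold C. assert (0 <= sumR m (fun i => Rabs (c i))) by (apply sumR_nonneg; intros; apply Rabs_pos). lra. }
  set (t := - hfun m c d lam z / (2 * C)).
  assert (Ht : 0 < t). { unfold t. apply Rdiv_lt_0_compat; lra. }
  set (u := fun i => z i + t * ind (Q0 i)).
  assert (Hu : 0 <= hfun m c d lam u).
  { apply Hnn; intros i Hi HQ; unfold u, ind; rewrite HQ. - assert (H := Hz0 i Hi); lra. - rewrite Hzq; auto; ring. }
  assert (Hdiff := hfun_diff_le m c d lam z u Hl Hd).
  assert (Hle : sumR m (fun i => c i * (u i - z i)) <= t * C).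
  { unfold C. rewrite Rmult_plus_distr_l, <- sumR_scal.
    assert (sumR m (fun i => c i * (u i - z i)) <= sumR m (fun i => t * Rabs (c i))); [|lra].
    apply sumR_le. intros i Hi. unfold u, ind. destruct (Q0 i).
    - replace (z i + t * 1 - z i) with t by ring. rewrite Rmult_comm. apply Rmult_le_compat_l; [lra|apply Rle_abs].
    - replace (z i + t * 0 - z i) with 0 by ring. rewrite Rmult_0_r. apply Rmult_le_pos; [lra|apply Rabs_pos]. }
  assert (hfun m c d lam u - hfun m c d lam z <= t * C).
  { eapply Rle_trans; [apply Hdiff|auto]. intros i Hi. unfold u, ind. split; auto. destruct (Q0 i); lra. }
  assert (t * C = - hfun m c d lam z / 2) by (unfold t; field; lra). lra.
Qed.

Lemma lim_lemma c w K : (forall t, 0 < t -> K <= c * (w + t)) -> K <= c * w.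
Proof.
  intros H. destruct (Rle_dec K (c * w)) as [|Hn]; auto. exfalso.
  set (t := (K - c * w) / (2 * Rabs c + 1)).
  assert (Hpos : 0 < 2 * Rabs c + 1) by (assert (0 <= Rabs c) by apply Rabs_pos; lra).
  assert (Ht : 0 < t) by (unfold t; apply Rdiv_lt_0_compat; lra).
  assert (H1 := H t Ht).
  assert (c * t <= Rabs c * t) by (apply Rmult_le_compat_r; [lra| apply Rle_abs]).
  assert (Rabs c * t < K - c * w).
  { unfold t. apply (Rmult_lt_reg_r (2 * Rabs c + 1)); auto. field_simplify; [|lra].
    assert (0 <= Rabs c) by apply Rabs_pos. nra. }
  lra.
Qed.

Lemma power_contra dd B C al : 0 < dd -> 0 < al < 1 ->
  (forall t, 0 < t -> dd * exp (al * ln t + B) <= t * C) -> False.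
Proof.
  intros Hd Ha H. assert (HeB := exp_pos B).
  destruct (Rle_dec C 0) as [HC|HC].
  { assert (H1 := H 1 ltac:(lra)). rewrite ln_1, Rmult_0_r, Rplus_0_l in H1.
    assert (0 < dd * exp B) by (apply Rmult_lt_0_compat; auto). nra. }
  set (r := dd * exp B / (2 * C)).
  assert (Hr : 0 < r) by (unfold r; apply Rdiv_lt_0_compat; [apply Rmult_lt_0_compat; auto|lra]).
  set (L := ln r / (1 - al)).
  assert (H1 := H (exp L) (exp_pos L)). rewrite ln_exp in H1.
  assert (E : exp L = exp (al * L) * r).
  { rewrite <- (exp_ln r) by auto. rewrite <- exp_plus. f_equal. unfold L. field. lra. }
  rewrite E, exp_plus in H1.
  assert (Hea := exp_pos (al * L)).
  assert (dd * (exp (al * L) * exp B) <= exp (al * L) * r * C) by auto.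
  assert (r * C = dd * exp B / 2) by (unfold r; field; lra).
  assert (0 < dd * exp B * exp (al * L)) by (apply Rmult_lt_0_compat; [apply Rmult_lt_0_compat|]; auto).
  nra.
Qed.

Lemma gt_step m l w i1 t : (forall i, 0 <= l i) -> (i1 < m)%nat -> (forall i, (i < m)%nat -> 0 <= w i) -> 0 < w i1 -> 0 < t ->
  t * (l i1 * Gt m l w / (w i1 + t)) <= Gt m l (fun i => w i + (if Nat.eq_dec i i1 then t else 0)) - Gt m l w.
Proof.
  intros Hl Hi1 Hw Hw1 Ht.
  set (u := fun i => w i + (if Nat.eq_dec i i1 then t else 0)).
  assert (Hwu : forall i, (i < m)%nat -> 0 <= w i <= u i).
  { intros i Hi. unfold u. assert (H := Hw i Hi). destruct (Nat.eq_dec i i1); lra. }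
  destruct (classic (forall i, (i < m)%nat -> l i <> 0 -> 0 < w i)) as [Hp|Hn].
  - assert (Hpu : forall i, (i < m)%nat -> l i <> 0 -> 0 < u i).
    { intros i Hi Hli. assert (H := Hwu i Hi). assert (H' := Hp i Hi Hli). lra. }
    rewrite (Gt_pos_form m l w Hp), (Gt_pos_form m l u Hpu).
    rewrite (sumR_update m (fun i => l i * ln (w i)) (fun i => l i * ln (u i)) i1 Hi1).
    2:{ intros i Hi Hne. unfold u. destruct (Nat.eq_dec i i1); [congruence|]. rewrite Rplus_0_r. auto. }
    unfold u at 1. destruct (Nat.eq_dec i1 i1) as [_|]; [|congruence].
    set (A := sumR m (fun i => l i * ln (w i))).
    set (Bv := l i1 * ln (w i1 + t) - l i1 * ln (w i1)).
    assert (HB : l i1 * (t / (w i1 + t)) <= Bv).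
    { unfold Bv. rewrite <- Rmult_minus_distr_l. apply Rmult_le_compat_l; auto. apply ln_ratio; auto. }
    rewrite exp_plus. assert (Hexp := exp_tangent 0 Bv). rewrite exp_0 in Hexp.
    assert (HA := exp_pos A).
    assert (exp A * (1 + Bv - 0) <= exp A * exp Bv) by (apply Rmult_le_compat_l; lra).
    replace (t * (l i1 * exp A / (w i1 + t))) with (exp A * (l i1 * (t / (w i1 + t)))) by (field; lra).
    assert (exp A * (l i1 * (t / (w i1 + t))) <= exp A * Bv) by (apply Rmult_le_compat_l; lra).
    lra.
  - apply not_all_ex_not in Hn. destruct Hn as [i Hi].
    apply imply_to_and in Hi. destruct Hi as [Him Hi]. apply imply_to_and in Hi. destruct Hi as [Hli Hi].
    rewrite (Gt_zero_form m l w i Him Hli) by lra.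
    replace (t * (l i1 * 0 / (w i1 + t))) with 0 by (field; lra).
    assert (Gt m l w <= Gt m l u) by (apply Gt_mono; auto).
    rewrite (Gt_zero_form m l w i Him Hli) in H by lra. fold u. lra.
Qed.

Lemma min_ge m Q c d lam w u : (forall j, (j < m)%nat -> sumR m (lam j) = 1) ->
  (forall z, inD m Q z -> hfun m c d lam w <= hfun m c d lam z) -> 0 <= hfun m c d lam w ->
  (forall i, (i < m)%nat -> 0 <= u i) -> (forall i, (i < m)%nat -> Q i = false -> u i = 0) -> 1 <= sumR m u ->
  hfun m c d lam w <= hfun m c d lam u.
Proof.
  intros Hs Hmin Hm0 Hu0 HuQ Hsum. set (s := sumR m u).
  assert (Hs0 : 0 < s) by (unfold s; lra).
  set (v := fun i => / s * u i).
  assert (Hv : inD m Q v).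
  { split; [|split].
    - intros i Hi. unfold v. apply Rmult_le_pos; [left; apply Rinv_0_lt_compat; auto| auto].
    - intros i Hi HQ. unfold v. rewrite HuQ; auto; ring.
    - unfold v. rewrite sumR_scal. fold s. field. lra. }
  assert (Hv0 : forall i, (i < m)%nat -> 0 <= v i) by (destruct Hv as [H _]; auto).
  assert (E : hfun m c d lam u = s * hfun m c d lam v).
  { rewrite <- hfun_hom by auto. apply hfun_ext. intros i Hi. unfold v. field. lra. }
  assert (H := Hmin v Hv). rewrite E.
  assert (1 <= s) by (unfold s; lra).
  assert (0 <= (s - 1) * hfun m c d lam v) by (apply Rmult_le_pos; lra). nra.
Qed.

Lemma deriv_bound m Q c d lam w i1 : (forall j i, 0 <= lam j i) -> (forall j, (j < m)%nat -> sumR m (lam j) = 1) ->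
  (forall j, 0 <= d j) -> inD m Q w -> (forall z, inD m Q z -> hfun m c d lam w <= hfun m c d lam z) ->
  0 <= hfun m c d lam w -> (i1 < m)%nat -> Q i1 = true -> 0 < w i1 ->
  sumR m (fun j => d j * lam j i1 * Gt m (lam j) w / w i1) <= c i1.
Proof.
  intros Hl Hs Hd Hw Hmin Hm0 Hi1 HQ1 Hw1.
  destruct Hw as [Hw0 [HwQ Hw1s]].
  set (K := sumR m (fun j => d j * (lam j i1 * Gt m (lam j) w))).
  assert (Hlim : forall t, 0 < t -> K <= c i1 * (w i1 + t)).
  { intros t Ht. set (u := fun i => w i + (if Nat.eq_dec i i1 then t else 0)).
    assert (Hu0 : forall i, (i < m)%nat -> 0 <= w i <= u i).
    { intros i Hi. unfold u. assert (H := Hw0 i Hi). destruct (Nat.eq_dec i i1); lra. }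
    assert (Hge : hfun m c d lam w <= hfun m c d lam u).
    { apply (min_ge m Q c d lam w u Hs Hmin Hm0).
      - intros i Hi. assert (H := Hu0 i Hi). lra.
      - intros i Hi HQ. unfold u. destruct (Nat.eq_dec i i1) as [->|]; [congruence|]. rewrite HwQ; auto; ring.
      - rewrite (sumR_update m w u i1 Hi1). unfold u. destruct (Nat.eq_dec i1 i1); [|congruence]. lra.
        intros i Hi Hne. unfold u. destruct (Nat.eq_dec i i1); [congruence|ring]. }
    assert (Hd2 := hfun_diff_eq m c d lam w u).
    assert (Hc : sumR m (fun i => c i * (u i - w i)) = c i1 * t).
    { rewrite <- (sumR_point m i1 (c i1 * t) Hi1). apply sumR_ext. intros i Hi. unfold u.
      destruct (Nat.eq_dec i i1) as [->|]; ring. }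
    assert (HG : sumR m (fun j => d j * (t * (lam j i1 * Gt m (lam j) w / (w i1 + t)))) <=
                 sumR m (fun j => d j * (Gt m (lam j) u - Gt m (lam j) w))).
    { apply sumR_le. intros j Hj. apply Rmult_le_compat_l; auto. apply gt_step; auto. }
    rewrite (sumR_ext m _ (fun j => (t / (w i1 + t)) * (d j * (lam j i1 * Gt m (lam j) w)))) in HG.
    2:{ intros j Hj. field. lra. }
    rewrite sumR_scal in HG. fold K in HG.
    assert (t / (w i1 + t) * K <= c i1 * t) by lra.
    apply (Rmult_le_reg_l (t / (w i1 + t))). apply Rdiv_lt_0_compat; lra.
    replace (t / (w i1 + t) * (c i1 * (w i1 + t))) with (c i1 * t) by (field; lra). auto. }
  assert (HK := lim_lemma _ _ _ Hlim).
  rewrite (sumR_ext m _ (fun j => / w i1 * (d j * (lam j i1 * Gt m (lam j) w)))) by (intros; field; lra).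
  rewrite sumR_scal. fold K. apply (Rmult_le_reg_l (w i1)); auto.
  replace (w i1 * (/ w i1 * K)) with K by (field; lra). lra.
Qed.

Definition zb (x : R) : bool := if Req_EM_T x 0 then true else false.

Lemma no_straddle m Q c d lam w j i1 i2 : (forall j i, 0 <= lam j i) -> (forall j, (j < m)%nat -> sumR m (lam j) = 1) ->
  (forall j, 0 <= d j) -> inD m Q w -> (forall z, inD m Q z -> hfun m c d lam w <= hfun m c d lam z) ->
  0 <= hfun m c d lam w -> (j < m)%nat -> 0 < d j -> (forall i, (i < m)%nat -> lam j i <> 0 -> Q i = true) ->
  (i1 < m)%nat -> lam j i1 <> 0 -> 0 < w i1 -> (i2 < m)%nat -> lam j i2 <> 0 -> w i2 = 0 -> False.
Proof.
  intros Hl Hs Hd Hw Hmin Hm0 Hj Hdj Hsupp Hi1 Hl1 Hw1 Hi2 Hl2 Hw2.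
  destruct Hw as [Hw0 [HwQ Hw1s]].
  set (Sb := fun i => andb (Q i) (zb (w i))).
  assert (HS2 : Sb i2 = true). { unfold Sb, zb. rewrite Hsupp; auto. destruct (Req_EM_T (w i2) 0); auto. }
  assert (HS1 : Sb i1 = false). { unfold Sb, zb. destruct (Req_EM_T (w i1) 0); [lra|]. destruct (Q i1); auto. }
  set (C := sumR m (fun i => c i * ind (Sb i))).
  set (al := sumR m (fun i => lam j i * ind (Sb i))).
  set (B := sumR m (fun i => lam j i * (1 - ind (Sb i)) * ln (w i))).
  assert (Hind : forall i, 0 <= ind (Sb i) <= 1) by (intros; unfold ind; destruct (Sb i); lra).
  assert (Hal0 : 0 < al).
  { apply (sumR_pos m _ i2); auto. intros i Hi. apply Rmult_le_pos; [apply Hl|apply Hind].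
    rewrite HS2. unfold ind. rewrite Rmult_1_r. assert (H := Hl j i2). lra. }
  assert (Hal1 : al < 1).
  { assert (E : al + sumR m (fun i => lam j i * (1 - ind (Sb i))) = 1).
    { unfold al. rewrite <- sumR_plus. transitivity (sumR m (lam j)); [apply sumR_ext; intros; ring| apply Hs; auto]. }
    assert (0 < sumR m (fun i => lam j i * (1 - ind (Sb i)))); [|lra].
    apply (sumR_pos m _ i1); auto. intros i Hi. apply Rmult_le_pos; [apply Hl|assert (H := Hind i); lra].
    rewrite HS1. unfold ind. rewrite Rminus_0_r, Rmult_1_r. assert (H := Hl j i1). lra. }
  apply (power_contra (d j) B C al Hdj (conj Hal0 Hal1)).
  intros t Ht.
  set (u := fun i => w i + t * ind (Sb i)).
  assert (Hu0 : forall i, (i < m)%nat -> 0 <= w i <= u i).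
  { intros i Hi. unfold u. assert (H := Hw0 i Hi). assert (H' := Hind i). split; auto.
    assert (0 <= t * ind (Sb i)) by (apply Rmult_le_pos; lra). lra. }
  assert (Hge : hfun m c d lam w <= hfun m c d lam u).
  { apply (min_ge m Q c d lam w u Hs Hmin Hm0).
    - intros i Hi. assert (H := Hu0 i Hi). lra.
    - intros i Hi HQ. unfold u, Sb. rewrite HQ. simpl. unfold ind. rewrite HwQ; auto; ring.
    - unfold u. rewrite sumR_plus, Hw1s, sumR_scal.
      assert (0 <= sumR m (fun i => ind (Sb i))) by (apply sumR_nonneg; intros; apply Hind).
      assert (0 <= t * sumR m (fun i => ind (Sb i))) by (apply Rmult_le_pos; lra). lra. }
  assert (Hd2 := hfun_diff_eq m c d lam w u).
  assert (Hc : sumR m (fun i => c i * (u i - w i)) = t * C).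
  { unfold C. rewrite <- sumR_scal. apply sumR_ext. intros i Hi. unfold u. ring. }
  assert (Hterm : d j * (Gt m (lam j) u - Gt m (lam j) w) <= sumR m (fun k => d k * (Gt m (lam k) u - Gt m (lam k) w))).
  { apply (sumR_term_le m (fun k => d k * (Gt m (lam k) u - Gt m (lam k) w)) j); auto.
    intros k Hk. apply Rmult_le_pos; auto. assert (Gt m (lam k) w <= Gt m (lam k) u) by (apply Gt_mono; auto). lra. }
  rewrite (Gt_zero_form m (lam j) w i2 Hi2 Hl2) in Hterm by lra.
  assert (HGu : Gt m (lam j) u = exp (al * ln t + B)).
  { assert (Hpos : forall i, (i < m)%nat -> lam j i <> 0 -> 0 < u i).
    { intros i Hi Hli. unfold u, Sb, zb. rewrite (Hsupp i Hi Hli). simpl.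
      destruct (Req_EM_T (w i) 0) as [E|E]. { unfold ind. rewrite E. lra. }
      unfold ind. assert (H := Hw0 i Hi). lra. }
    rewrite (Gt_pos_form m (lam j) u Hpos). f_equal. unfold al, B. rewrite <- sumR_scal_r, <- sumR_plus.
    apply sumR_ext. intros i Hi. destruct (Req_EM_T (lam j i) 0) as [E|E]. { rewrite E. ring. }
    unfold u, Sb, zb. rewrite (Hsupp i Hi E). simpl. unfold ind.
    destruct (Req_EM_T (w i) 0) as [E2|E2].
    - rewrite E2. rewrite Rplus_0_l, Rmult_1_r. ring.
    - rewrite Rmult_0_r, Rplus_0_r. ring. }
  rewrite HGu in Hterm. lra.
Qed.

Lemma amgm_int m l dj w y : (forall i, 0 <= l i) -> sumR m l = 1 -> 0 <= dj ->
  (forall i, (i < m)%nat -> l i <> 0 -> 0 < w i) ->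
  dj * exp (sumR m (fun i => l i * y i)) <= sumR m (fun i => (dj * l i * Gt m l w / w i) * exp (y i)).
Proof.
  intros Hl Hs Hd Hw.
  rewrite (Gt_pos_form m l w Hw).
  set (A := sumR m (fun i => l i * ln (w i))).
  set (Y := sumR m (fun i => l i * y i)).
  assert (E : sumR m (fun i => (dj * l i * exp A / w i) * exp (y i)) =
              dj * exp A * sumR m (fun i => l i * exp (y i - ln (w i)))).
  { rewrite <- sumR_scal. apply sumR_ext. intros i Hi. destruct (Req_EM_T (l i) 0) as [Z|Z].
    { rewrite Z. unfold Rdiv. ring. }
    assert (Hwi := Hw i Hi Z). unfold Rminus. rewrite exp_plus, exp_Ropp, exp_ln by auto. field. lra. }
  rewrite E.
  assert (Hge : exp (Y - A) <= sumR m (fun i => l i * exp (y i - ln (w i)))).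
  { assert (H : sumR m (fun i => l i * (exp (Y - A) * (1 + (y i - ln (w i)) - (Y - A)))) <=
                sumR m (fun i => l i * exp (y i - ln (w i)))).
    { apply sumR_le. intros i Hi. apply Rmult_le_compat_l; auto. apply exp_tangent. }
    rewrite (sumR_ext m _ (fun i => exp (Y - A) * (1 - (Y - A)) * l i + exp (Y - A) * (l i * y i) - exp (Y - A) * (l i * ln (w i)))) in H by (intros; ring).
    rewrite !sumR_minus, sumR_plus, !sumR_scal, Hs in H. fold Y A in H.
    replace (exp (Y - A) * (1 - (Y - A)) * 1 + exp (Y - A) * Y - exp (Y - A) * A) with (exp (Y - A)) in H by ring. auto. }
  assert (exp Y = exp A * exp (Y - A)) by (rewrite <- exp_plus; f_equal; ring).
  rewrite H. assert (HA := exp_pos A).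
  assert (0 <= dj * exp A) by (apply Rmult_le_pos; lra).
  rewrite <- Rmult_assoc. apply Rmult_le_compat_l; auto.
Qed.

Fixpoint cnt (d : nat) (Q : nat -> bool) : nat :=
  match d with O => O | S d' => (cnt d' Q + (if Q d' then 1 else 0))%nat end.

Lemma cnt_le d Q S : (forall i, (i < d)%nat -> S i = true -> Q i = true) -> (cnt d S <= cnt d Q)%nat.
Proof. induction d; intros H; simpl; [lia|]. assert (IH := IHd ltac:(intros; apply H; auto; lia)).
  destruct (S d) eqn:E1; [rewrite (H d ltac:(lia) E1)|destruct (Q d)]; lia. Qed.

Lemma cnt_lt d Q S : (forall i, (i < d)%nat -> S i = true -> Q i = true) ->
  (exists i, (i < d)%nat /\ Q i = true /\ S i = false) -> (cnt d S < cnt d Q)%nat.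
Proof. induction d; intros H [i [Hi [HQ HS]]]; simpl; [lia|].
  destruct (Nat.eq_dec i d) as [->|Hne].
  - assert (cnt d S <= cnt d Q)%nat by (apply cnt_le; intros; apply H; auto; lia). rewrite HQ, HS. lia.
  - assert (cnt d S < cnt d Q)%nat by (apply IHd; [intros; apply H; auto; lia| exists i; repeat split; auto; lia]).
    destruct (S d) eqn:E1; [rewrite (H d ltac:(lia) E1)|destruct (Q d)]; lia. Qed.

Lemma cnt_pos d Q i : (i < d)%nat -> Q i = true -> (0 < cnt d Q)%nat.
Proof. intros Hi HQ. assert (H := cnt_lt d Q (fun _ => false) ltac:(intros; discriminate) ltac:(exists i; auto)).
  lia. Qed.

Definition certQ (m : nat) (Q : nat -> bool) (c d : nat -> R) (lam : nat -> nat -> R) (ell : nat -> nat -> R) : Prop :=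
  (forall j i, 0 <= ell j i) /\
  (forall j i, Q i = false -> ell j i = 0) /\
  (forall i, (i < m)%nat -> Q i = true -> sumR m (fun j => ell j i) <= c i) /\
  (forall j, (j < m)%nat -> (forall i, (i < m)%nat -> lam j i <> 0 -> Q i = true) ->
     forall y, d j * exp (sumR m (fun i => lam j i * y i)) <= sumR m (fun i => ell j i * exp (y i))).

Lemma caseA m Q c d lam : (forall j, (j < m)%nat -> sumR m (lam j) = 1) ->
  (forall i, (i < m)%nat -> Q i = false) -> certQ m Q c d lam (fun _ _ => 0).
Proof.
  intros Hs HQ. split; [|split; [|split]].
  - intros; lra. - intros; auto.
  - intros i Hi HQi. rewrite HQ in HQi; auto; discriminate.
  - intros j Hj Hsupp y. exfalso. assert (H := Hs j Hj). rewrite sumR_zero in H; [lra|].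
    intros i Hi. destruct (Req_EM_T (lam j i) 0); auto.
    assert (H2 := Hsupp i Hi n). rewrite HQ in H2; auto. discriminate.
Qed.

Lemma caseB m Q Q0 c d lam w : (forall j i, 0 <= lam j i) -> (forall j, (j < m)%nat -> sumR m (lam j) = 1) ->
  (forall j, 0 <= d j) -> inD m Q w -> (forall z, inD m Q z -> hfun m c d lam w <= hfun m c d lam z) ->
  0 <= hfun m c d lam w ->
  (forall S, (cnt m S < cnt m Q)%nat -> (forall i, (i < m)%nat -> S i = true -> Q0 i = true) -> exists ell, certQ m S c d lam ell) ->
  (forall i, (i < m)%nat -> Q i = true -> Q0 i = true) ->
  exists ell, certQ m Q c d lam ell.
Proof.
  intros Hl Hs Hd Hw Hmin Hm0 IH HQQ0.
  assert (Hw' := Hw). destruct Hw' as [Hw0 [HwQ Hw1s]].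
  set (Sb := fun i => andb (Q i) (zb (w i))).
  assert (HSQ : forall i, Sb i = true -> Q i = true).
  { intros i H. unfold Sb in H. apply andb_true_iff in H. tauto. }
  assert (HT : forall i, (i < m)%nat -> Q i = true -> Sb i = false -> 0 < w i).
  { intros i Hi HQ HS. unfold Sb, zb in HS. rewrite HQ in HS. simpl in HS.
    destruct (Req_EM_T (w i) 0); [discriminate|]. assert (H := Hw0 i Hi). lra. }
  assert (HSw : forall i, Sb i = true -> w i = 0).
  { intros i H. unfold Sb, zb in H. apply andb_true_iff in H. destruct H as [_ H].
    destruct (Req_EM_T (w i) 0); [auto|discriminate]. }
  destruct (IH Sb) as [ellS [HS1 [HS2 [HS3 HS4]]]].
  { apply cnt_lt. intros; auto.
    destruct (classic (exists i, (i < m)%nat /\ w i <> 0)) as [[i [Hi Hne]]|Hn].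
    - exists i. assert (HQi : Q i = true).
      { destruct (Q i) eqn:E; [reflexivity|exfalso; apply Hne; apply HwQ; auto]. }
      split; auto. split; auto. unfold Sb, zb. rewrite HQi. destruct (Req_EM_T (w i) 0); [congruence|auto].
    - exfalso. rewrite sumR_zero in Hw1s; [lra|]. intros i Hi. apply NNPP. intros Hne. apply Hn. exists i; auto. }
  { intros i Hi H. apply HQQ0; auto. }
  set (ellT := fun j i => if Sb i then 0 else if andb (Q i) (Nat.ltb i m) then d j * lam j i * Gt m (lam j) w / w i else 0).
  assert (HT1 : forall j i, 0 <= ellT j i).
  { intros j i. unfold ellT. destruct (Sb i) eqn:ES; [lra|]. destruct (Q i) eqn:EQ; simpl; [|lra].
    destruct (Nat.ltb i m) eqn:El; [|lra]. apply Nat.ltb_lt in El.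
    assert (Hwi := HT i El EQ ES). unfold Rdiv. apply Rmult_le_pos; [|left; apply Rinv_0_lt_compat; auto].
    apply Rmult_le_pos; [apply Rmult_le_pos; auto|apply Gt_nonneg]. }
  exists (fun j i => ellS j i + ellT j i). split; [|split; [|split]].
  - intros j i. assert (H1 := HS1 j i). assert (H2 := HT1 j i). lra.
  - intros j i HQ. assert (ES : Sb i = false) by (unfold Sb; rewrite HQ; auto).
    rewrite HS2 by auto. unfold ellT. rewrite ES, HQ. simpl. ring.
  - intros i Hi HQ. rewrite sumR_plus. destruct (Sb i) eqn:ES.
    + rewrite (sumR_zero m (fun j => ellT j i)). { assert (H := HS3 i Hi ES). lra. }
      intros j Hj. unfold ellT. rewrite ES. auto.
    + rewrite (sumR_zero m (fun j => ellS j i)) by (intros; apply HS2; auto).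
      rewrite (sumR_ext m (fun j => ellT j i) (fun j => d j * lam j i * Gt m (lam j) w / w i)).
      * rewrite Rplus_0_l. apply (deriv_bound m Q); auto.
      * intros j Hj. unfold ellT. rewrite ES, HQ. simpl. apply Nat.ltb_lt in Hi. rewrite Hi. auto.
  - intros j Hj Hsupp y.
    assert (Hmono : forall f, (forall i, (i < m)%nat -> f i <= ellS j i + ellT j i) ->
              sumR m (fun i => f i * exp (y i)) <= sumR m (fun i => (ellS j i + ellT j i) * exp (y i))).
    { intros f Hf. apply sumR_le. intros i Hi. apply Rmult_le_compat_r; [left; apply exp_pos| auto]. }
    destruct (classic (forall i, (i < m)%nat -> lam j i <> 0 -> Sb i = true)) as [HinS|HnS].
    + eapply Rle_trans; [apply HS4; auto|]. apply Hmono. intros i Hi. assert (H := HT1 j i). lra.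
    + apply not_all_ex_not in HnS. destruct HnS as [i1 Hi1].
      apply imply_to_and in Hi1. destruct Hi1 as [Hi1m Hi1]. apply imply_to_and in Hi1. destruct Hi1 as [Hl1 HS1f].
      apply not_true_is_false in HS1f.
      assert (HQ1 := Hsupp i1 Hi1m Hl1). assert (Hw1 := HT i1 Hi1m HQ1 HS1f).
      destruct (Rle_dec (d j) 0) as [Hd0|Hdp].
      * assert (d j = 0) by (assert (H := Hd j); lra). rewrite H, Rmult_0_l.
        apply sumR_nonneg. intros i Hi. apply Rmult_le_pos; [|left; apply exp_pos].
        assert (H1 := HS1 j i). assert (H2 := HT1 j i). lra.
      * assert (Hdj : 0 < d j) by lra.
        assert (Hpos : forall i, (i < m)%nat -> lam j i <> 0 -> 0 < w i).
        { intros i Hi Hli. destruct (Rle_dec (w i) 0) as [Hwi|Hwi]; [|lra]. exfalso.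
          apply (no_straddle m Q c d lam w j i1 i); auto. assert (H := Hw0 i Hi). lra. }
        eapply Rle_trans; [apply (amgm_int m (lam j) (d j) w y); auto|].
        apply Hmono. intros i Hi. destruct (Req_EM_T (lam j i) 0) as [Z|Z].
        { rewrite Z. unfold Rdiv. rewrite Rmult_0_r, Rmult_0_l. assert (H1 := HS1 j i). assert (H2 := HT1 j i). lra. }
        assert (ESi : Sb i = false).
        { destruct (Sb i) eqn:E; auto. assert (H := HSw i E). assert (H' := Hpos i Hi Z). lra. }
        unfold ellT. rewrite ESi, (Hsupp i Hi Z). simpl. apply Nat.ltb_lt in Hi. rewrite Hi.
        assert (H1 := HS1 j i). lra.
Qed.

Lemma core m Q0 c d lam : (forall j i, 0 <= lam j i) -> (forall j, (j < m)%nat -> sumR m (lam j) = 1) ->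
  (forall j, 0 <= d j) ->
  (forall z, (forall i, (i < m)%nat -> Q0 i = true -> 0 < z i) -> (forall i, (i < m)%nat -> Q0 i = false -> z i = 0) -> 0 <= hfun m c d lam z) ->
  exists ell, certQ m Q0 c d lam ell.
Proof.
  intros Hl Hs Hd Hnn.
  assert (Main : forall N Q, (cnt m Q <= N)%nat -> (forall i, (i < m)%nat -> Q i = true -> Q0 i = true) ->
            exists ell, certQ m Q c d lam ell).
  { induction N as [|N IHN]; intros Q HN HQQ0;
    (destruct (classic (exists i0, (i0 < m)%nat /\ Q i0 = true)) as [[i0 [Hi0 HQi0]]|Hno];
     [|exists (fun _ _ => 0); apply caseA; auto; intros i Hi; apply not_true_is_false; intros HQ; apply Hno; exists i; auto]).
    - assert (H := cnt_pos m Q i0 Hi0 HQi0). lia.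
    - destruct (EVT.evt_rv m c d lam Q i0 Hl Hi0 HQi0) as [w [Hw Hmin]].
      assert (Hm0 : 0 <= hfun m c d lam w).
      { destruct Hw as [Hw0 [HwQ _]]. apply (hnn_closed m Q0 c d lam Hl Hd Hnn); auto.
        intros i Hi HQ0. apply HwQ; auto. apply not_true_is_false. intros HQ. rewrite (HQQ0 i Hi HQ) in HQ0. discriminate. }
      apply (caseB m Q Q0 c d lam w Hl Hs Hd Hw Hmin Hm0); auto.
      intros S HS HSQ0. apply IHN; auto. lia. }
  apply (Main (cnt m Q0) Q0); auto.
Qed.

Definition inConv (n m : nat) (a : nat -> nat -> R) (U : nat -> bool) (p : nat -> R) : Prop :=
  exists th : nat -> R, (forall k, 0 <= th k) /\ (forall k, (k < m)%nat -> U k = false -> th k = 0) /\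
    sumR m th = 1 /\ vec_eq n p (fun r => sumR m (fun k => th k * a k r)).

Lemma sumR_ind_at d k f : (k < d)%nat -> sumR d (fun i => ind_at k i * f i) = f k.
Proof. intros Hk. rewrite <- (sumR_point d k (f k) Hk). apply sumR_ext. intros i Hi. unfold ind_at.
  destruct (Nat.eq_dec i k) as [->|]; ring. Qed.

Lemma inConv_col n m a U k : (k < m)%nat -> U k = true -> inConv n m a U (a k).
Proof. intros Hk HU. exists (ind_at k). split; [|split; [|split]].
  - intros i. unfold ind_at. destruct (Nat.eq_dec i k); lra.
  - intros i Hi HUi. unfold ind_at. destruct (Nat.eq_dec i k) as [->|]; [congruence|auto].
  - rewrite <- (sumR_point m k 1 Hk). apply sumR_ext. intros i Hi. unfold ind_at. auto.
  - intros r Hr. rewrite sumR_ind_at; auto. Qed.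

Lemma inConv_mono n m a U U' p : (forall k, (k < m)%nat -> U k = true -> U' k = true) -> inConv n m a U p -> inConv n m a U' p.
Proof. intros H [th [H1 [H2 [H3 H4]]]]. exists th. split; [auto|split; [|auto]].
  intros k Hk HU'. apply H2; auto. destruct (U k) eqn:E; auto. rewrite (H k Hk E) in HU'. discriminate. Qed.

Lemma New_inConv n m a p : New n m a p -> inConv n m a (fun _ => true) p.
Proof. intros [lam [H1 [H2 H3]]]. exists (fun k => if Nat.ltb k m then lam k else 0). split; [|split; [|split]].
  - intros k. destruct (Nat.ltb k m) eqn:E; [apply Nat.ltb_lt in E; auto|lra].
  - intros k Hk HU. discriminate.
  - rewrite <- H2. apply sumR_ext. intros i Hi. apply Nat.ltb_lt in Hi. rewrite Hi. auto.
  - intros r Hr. rewrite H3 by auto. apply sumR_ext. intros i Hi. apply Nat.ltb_lt in Hi. rewrite Hi. auto. Qed.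

Lemma inConv_New n m a U p : inConv n m a U p -> New n m a p.
Proof. intros [th [H1 [H2 [H3 H4]]]]. exists th. auto. Qed.

Lemma inConv_comp n m a U U' p : inConv n m a U p -> (forall k, (k < m)%nat -> U k = true -> inConv n m a U' (a k)) ->
  inConv n m a U' p.
Proof.
  intros [th [H1 [H2 [H3 H4]]]] Hk.
  assert (Hch : forall k, exists kap : nat -> R, (k < m)%nat -> U k = true ->
     (forall q, 0 <= kap q) /\ (forall q, (q < m)%nat -> U' q = false -> kap q = 0) /\
     sumR m kap = 1 /\ vec_eq n (a k) (fun r => sumR m (fun q => kap q * a q r))).
  { intros k. destruct (classic ((k < m)%nat /\ U k = true)) as [[Hkm HU]|Hn].
    - destruct (Hk k Hkm HU) as [kap Hkap]. exists kap. auto.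
    - exists (fun _ => 0). intros Hkm HU. exfalso; auto. }
  destruct (choice _ Hch) as [K HK].
  exists (fun q => sumR m (fun k => th k * K k q)). split; [|split; [|split]].
  - intros q. apply sumR_nonneg. intros k Hkm. destruct (U k) eqn:E.
    + apply Rmult_le_pos; auto. apply (HK k Hkm E).
    + rewrite H2; auto. lra.
  - intros q Hq HU'. apply sumR_zero. intros k Hkm. destruct (U k) eqn:E.
    + destruct (HK k Hkm E) as [_ [HK2 _]]. rewrite HK2; auto. ring.
    + rewrite H2; auto. ring.
  - rewrite sumR_swap. rewrite <- H3. apply sumR_ext. intros k Hkm. rewrite sumR_scal. destruct (U k) eqn:E.
    + destruct (HK k Hkm E) as [_ [_ [HK3 _]]]. rewrite HK3. ring.
    + rewrite H2; auto. ring.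
  - intros r Hr. rewrite H4 by auto.
    rewrite (sumR_ext m (fun q => sumR m (fun k => th k * K k q) * a q r) (fun q => sumR m (fun k => th k * (K k q * a q r)))).
    2:{ intros q Hq. rewrite <- sumR_scal_r. apply sumR_ext. intros; ring. }
    rewrite <- sumR_swap. apply sumR_ext. intros k Hkm. rewrite sumR_scal. destruct (U k) eqn:E.
    + destruct (HK k Hkm E) as [_ [_ [_ HK4]]]. rewrite (HK4 r Hr). auto.
    + rewrite H2; auto. ring.
Qed.

Lemma only_v m mu v k : (forall i, 0 <= mu i) -> sumR m mu = 1 -> (v < m)%nat -> mu v = 1 -> (k < m)%nat -> k <> v -> mu k = 0.
Proof.
  intros H0 Hs Hv Hmv Hk Hne.
  set (g := fun x => if Nat.eq_dec x v then 0 else mu x).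
  assert (E := sumR_update m g mu v Hv). rewrite E in Hs.
  2:{ intros i Hi Hiv. unfold g. destruct (Nat.eq_dec i v); [congruence|auto]. }
  assert (g k <= sumR m g) by (apply sumR_term_le; auto; intros i Hi; unfold g; destruct (Nat.eq_dec i v); [lra|auto]).
  unfold g in *. destruct (Nat.eq_dec k v); [congruence|]. destruct (Nat.eq_dec v v); [|congruence].
  assert (H1 := H0 k). lra.
Qed.

Definition Uminus (U : nat -> bool) (v : nat) : nat -> bool := fun k => andb (U k) (negb (Nat.eqb k v)).

Lemma elim_v n m a U v th : (v < m)%nat -> (forall k, 0 <= th k) -> (forall k, (k < m)%nat -> U k = false -> th k = 0) ->
  sumR m th = 1 -> vec_eq n (a v) (fun r => sumR m (fun k => th k * a k r)) -> th v < 1 ->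
  inConv n m a (Uminus U v) (a v).
Proof.
  intros Hv H0 H1 H2 H3 Hlt.
  exists (fun k => if Nat.eq_dec k v then 0 else th k / (1 - th v)). split; [|split; [|split]].
  - intros k. destruct (Nat.eq_dec k v); [lra|]. unfold Rdiv. apply Rmult_le_pos; auto. left; apply Rinv_0_lt_compat; lra.
  - intros k Hk HU. destruct (Nat.eq_dec k v); auto. unfold Uminus in HU.
    apply andb_false_iff in HU. destruct HU as [HU|HU].
    + rewrite H1; auto. unfold Rdiv; ring.
    + apply negb_false_iff in HU. apply Nat.eqb_eq in HU. congruence.
  - rewrite (sumR_ext m _ (fun k => / (1 - th v) * (if Nat.eq_dec k v then 0 else th k))).
    2:{ intros k Hk. destruct (Nat.eq_dec k v); unfold Rdiv; ring. }
    rewrite sumR_scal. rewrite (sumR_update m th (fun k => if Nat.eq_dec k v then 0 else th k) v Hv).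
    2:{ intros i Hi Hiv. destruct (Nat.eq_dec i v); [congruence|auto]. }
    destruct (Nat.eq_dec v v); [|congruence]. rewrite H2. field. lra.
  - intros r Hr.
    rewrite (sumR_ext m _ (fun k => / (1 - th v) * (if Nat.eq_dec k v then 0 else th k * a k r))).
    2:{ intros k Hk. destruct (Nat.eq_dec k v); unfold Rdiv; ring. }
    rewrite sumR_scal. rewrite (sumR_update m (fun k => th k * a k r) (fun k => if Nat.eq_dec k v then 0 else th k * a k r) v Hv).
    2:{ intros i Hi Hiv. destruct (Nat.eq_dec i v); [congruence|auto]. }
    destruct (Nat.eq_dec v v); [|congruence]. rewrite <- (H3 r Hr). field. lra.
Qed.

Lemma hull_step n m a U v : (v < m)%nat -> U v = true -> ~ extremal n m a v ->
  (forall k, (k < m)%nat -> inConv n m a U (a k)) -> inConv n m a (Uminus U v) (a v).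
Proof.
  intros Hv HUv Hne Hall.
  assert (HNew : New n m a (a v)) by (apply (inConv_New n m a (fun _ => true)); apply inConv_col; auto).
  unfold extremal, is_extreme_point in Hne.
  assert (Hex : exists y z t, New n m a y /\ New n m a z /\ 0 < t < 1 /\
     vec_eq n (a v) (fun k => t * y k + (1 - t) * z k) /\ ~ (vec_eq n y (a v) /\ vec_eq n z (a v))).
  { apply NNPP. intros Hn. apply Hne. split; auto. intros y z t Hy Hz Ht Heq.
    apply NNPP. intros Hc. apply Hn. exists y, z, t. auto. }
  destruct Hex as [y [z [t [Hy [Hz [Ht [Heq Hnot]]]]]]].
  assert (HyU : inConv n m a U y) by (apply (inConv_comp n m a (fun _ => true)); [apply New_inConv; auto| intros; apply Hall; auto]).
  assert (HzU : inConv n m a U z) by (apply (inConv_comp n m a (fun _ => true)); [apply New_inConv; auto| intros; apply Hall; auto]).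
  destruct HyU as [mu [Hm1 [Hm2 [Hm3 Hm4]]]]. destruct HzU as [nu [Hn1 [Hn2 [Hn3 Hn4]]]].
  set (th := fun k => t * mu k + (1 - t) * nu k).
  assert (Hth4 : vec_eq n (a v) (fun r => sumR m (fun k => th k * a k r))).
  { intros r Hr. rewrite (Heq r Hr), (Hm4 r Hr), (Hn4 r Hr). unfold th.
    rewrite <- !sumR_scal, <- sumR_plus. apply sumR_ext. intros; ring. }
  destruct (Rlt_le_dec (th v) 1) as [Hlt|Hge].
  - apply (elim_v n m a U v th); auto.
    + intros k. unfold th. assert (H1 := Hm1 k). assert (H2 := Hn1 k). nra.
    + intros k Hk HU. unfold th. rewrite Hm2, Hn2; auto. ring.
    + unfold th. rewrite sumR_plus, !sumR_scal, Hm3, Hn3. ring.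
  - exfalso. apply Hnot.
    assert (Hmv : mu v <= 1) by (rewrite <- Hm3; apply sumR_term_le; auto).
    assert (Hnv : nu v <= 1) by (rewrite <- Hn3; apply sumR_term_le; auto).
    unfold th in Hge.
    assert (E1 : mu v = 1).
    { assert (0 <= t * (1 - mu v)) by (apply Rmult_le_pos; lra).
      assert (0 <= (1 - t) * (1 - nu v)) by (apply Rmult_le_pos; lra).
      assert (t * (1 - mu v) = 0) by lra.
      apply Rmult_integral in H1. destruct H1; lra. }
    assert (E2 : nu v = 1).
    { assert (0 <= t * (1 - mu v)) by (apply Rmult_le_pos; lra).
      assert (0 <= (1 - t) * (1 - nu v)) by (apply Rmult_le_pos; lra).
      assert ((1 - t) * (1 - nu v) = 0) by lra.
      apply Rmult_integral in H1. destruct H1; lra. }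
    split; intros r Hr.
    + rewrite (Hm4 r Hr). rewrite <- (sumR_ind_at m v (fun k => a k r) Hv). apply sumR_ext. intros k Hk. cbv beta.
      unfold ind_at. destruct (Nat.eq_dec k v) as [Hkv|Hkv]. { subst k. rewrite E1. ring. } assert (Z : mu k = 0) by (apply (only_v m mu v k); auto). rewrite Z. ring.
    + rewrite (Hn4 r Hr). rewrite <- (sumR_ind_at m v (fun k => a k r) Hv). apply sumR_ext. intros k Hk. cbv beta.
      unfold ind_at. destruct (Nat.eq_dec k v) as [Hkv|Hkv]. { subst k. rewrite E2. ring. } assert (Z : nu k = 0) by (apply (only_v m nu v k); auto). rewrite Z. ring.
Qed.

Definition Eb (n m : nat) (a : nat -> nat -> R) (i : nat) : bool :=
  if excluded_middle_informative (extremal n m a i) then true else false.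

Lemma hull n m a : forall j, (j < m)%nat -> inConv n m a (Eb n m a) (a j).
Proof.
  assert (Main : forall N U, (cnt m U <= N)%nat -> (forall k, (k < m)%nat -> inConv n m a U (a k)) ->
            forall j, (j < m)%nat -> inConv n m a (Eb n m a) (a j)).
  { induction N as [|N IHN]; intros U HN Hall j Hj;
    (destruct (classic (exists v, (v < m)%nat /\ U v = true /\ ~ extremal n m a v)) as [[v [Hv [HUv Hnv]]]|Hno];
     [|apply (inConv_mono n m a U); [|apply Hall; auto];
       intros k Hk HUk; unfold Eb; destruct (excluded_middle_informative (extremal n m a k)) as [|Hn]; [auto|];
       exfalso; apply Hno; exists k; auto]).
    - assert (H := cnt_pos m U v Hv HUv). lia.
    - apply (IHN (Uminus U v)); auto.
      + assert (cnt m (Uminus U v) < cnt m U)%nat; [|lia].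
        apply cnt_lt.
        * intros i Hi H. unfold Uminus in H. apply andb_true_iff in H. tauto.
        * exists v. split; auto. split; auto. unfold Uminus. rewrite Nat.eqb_refl. simpl. apply andb_false_r.
      + intros k Hk. apply (inConv_comp n m a U); [apply Hall; auto|].
        intros k' Hk' HUk'. destruct (Nat.eq_dec k' v) as [->|Hne].
        * apply hull_step; auto.
        * apply inConv_col; auto. unfold Uminus. rewrite HUk'. simpl.
          destruct (Nat.eqb k' v) eqn:E; auto. apply Nat.eqb_eq in E. congruence. }
  apply (Main (cnt m (fun _ => true)) (fun _ => true)); auto.
  intros k Hk. apply inConv_col; auto.
Qed.

Lemma dot_ext N u x y : (forall k, (k < N)%nat -> x k = y k) -> dot N u x = dot N u y.
Proof. intros H. unfold dot. apply sumR_ext. intros k Hk. rewrite H; auto. Qed.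

Lemma dot_minus N u x y : dot N u (fun k => x k - y k) = dot N u x - dot N u y.
Proof. unfold dot. rewrite <- sumR_minus. apply sumR_ext. intros; ring. Qed.

Lemma dot_plus N u x y : dot N u (fun k => x k + y k) = dot N u x + dot N u y.
Proof. unfold dot. rewrite <- sumR_plus. apply sumR_ext. intros; ring. Qed.

Lemma dot_scal N u al x : dot N u (fun k => al * x k) = al * dot N u x.
Proof. unfold dot. rewrite <- sumR_scal. apply sumR_ext. intros; ring. Qed.

Lemma dot_sum N u K F : dot N u (fun k => sumR K (fun l => F l k)) = sumR K (fun l => dot N u (F l)).
Proof. unfold dot. rewrite <- sumR_swap. apply sumR_ext. intros k Hk. rewrite <- sumR_scal. auto. Qed.

Lemma dot_ind N u p : (p < N)%nat -> dot N u (ind_at p) = u p.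
Proof. intros Hp. unfold dot. rewrite (sumR_ext N _ (fun k => ind_at p k * u k)) by (intros; ring). apply sumR_ind_at; auto. Qed.

Lemma sumR_prefix K d f : sumR (K + d) (fun i => if Nat.ltb i K then f i else 0) = sumR K f.
Proof. induction d.
  - rewrite Nat.add_0_r. apply sumR_ext. intros i Hi. apply Nat.ltb_lt in Hi. rewrite Hi. auto.
  - rewrite Nat.add_succ_r. simpl. rewrite IHd. assert (E : Nat.ltb (K + d) K = false) by (apply Nat.ltb_ge; lia).
    rewrite E. ring. Qed.

Lemma ind_at_sym k i : ind_at k i = ind_at i k.
Proof. unfold ind_at. destruct (Nat.eq_dec i k), (Nat.eq_dec k i); auto; lia. Qed.

Lemma solve_rows N m (B : nat -> nat -> R) (P : nat -> bool) :
  (forall mu, (forall i, (i < m)%nat -> P i = false -> mu i = 0) ->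
     (forall k, (k < N)%nat -> sumR m (fun i => mu i * B i k) = 0) -> forall i, (i < m)%nat -> mu i = 0) ->
  forall K y, exists v, forall i, (i < K)%nat -> (i < m)%nat -> P i = true -> dot N (B i) v = y i.
Proof.
  intros Hind K. induction K as [|K IHK]; intros y.
  { exists (fun _ => 0). intros; lia. }
  destruct (classic ((K < m)%nat /\ P K = true)) as [[HKm HPK]|Hno].
  2:{ destruct (IHK y) as [v Hv]. exists v. intros i Hi Him HP. destruct (Nat.eq_dec i K) as [->|Hne].
      - exfalso; auto. - apply Hv; auto; lia. }
  assert (Hch : forall l, exists v, forall i, (i < K)%nat -> (i < m)%nat -> P i = true -> dot N (B i) v = ind_at l i).
  { intros l. apply IHK. }
  destruct (choice _ Hch) as [V HV].
  set (g := fun l => if andb (Nat.ltb l m) (P l) then 1 else 0).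
  set (yp := fun p k => ind_at p k - sumR K (fun l => g l * B l p * V l k)).
  assert (Hyp : forall p i, (p < N)%nat -> (i < K)%nat -> (i < m)%nat -> P i = true -> dot N (B i) (yp p) = 0).
  { intros p i Hp Hi Him HP. unfold yp. rewrite dot_minus, dot_ind by auto.
    rewrite dot_sum. rewrite (sumR_ext K _ (fun l => ind_at i l * (g l * B l p))).
    - rewrite sumR_ind_at by auto. unfold g. apply Nat.ltb_lt in Him. rewrite Him, HP. simpl. ring.
    - intros l Hl. rewrite dot_scal. rewrite HV; auto. rewrite ind_at_sym. ring. }
  assert (Hex : exists p, (p < N)%nat /\ dot N (B K) (yp p) <> 0).
  { apply NNPP. intros Hn.
    assert (Hall : forall p, (p < N)%nat -> dot N (B K) (yp p) = 0).
    { intros p Hp. apply NNPP. intros Hne. apply Hn. exists p. auto. }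
    set (mu := fun i => ind_at K i - (if Nat.ltb i K then g i * dot N (B K) (V i) else 0)).
    assert (H := Hind mu).
    assert (HmuK : mu K = 1).
    { unfold mu, ind_at. destruct (Nat.eq_dec K K); [|congruence]. rewrite Nat.ltb_irrefl. ring. }
    rewrite H in HmuK; auto; try lra.
    - intros i Hi HP. unfold mu, ind_at. destruct (Nat.eq_dec i K) as [->|]; [congruence|].
      unfold g. rewrite HP, andb_false_r. destruct (Nat.ltb i K); ring.
    - intros k Hk. assert (Hk0 := Hall k Hk). unfold yp in Hk0. rewrite dot_minus, dot_ind, dot_sum in Hk0 by auto.
      unfold mu. rewrite (sumR_ext m _ (fun i => ind_at K i * B i k - (if Nat.ltb i K then g i * dot N (B K) (V i) * B i k else 0))).
      2:{ intros i Hi. destruct (Nat.ltb i K); ring. }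
      rewrite sumR_minus, sumR_ind_at by auto.
      replace m with (K + (m - K))%nat by lia. rewrite sumR_prefix.
      assert (E : sumR K (fun l => dot N (B K) (fun k0 => g l * B l k * V l k0)) =
                  sumR K (fun i => g i * dot N (B K) (V i) * B i k)).
      { apply sumR_ext. intros l Hl. rewrite dot_scal. ring. }
      lra. }
  destruct Hex as [p [Hp Hnz]].
  destruct (IHK y) as [v0 Hv0].
  set (al := (y K - dot N (B K) v0) / dot N (B K) (yp p)).
  exists (fun k => v0 k + al * yp p k). intros i Hi Him HP.
  rewrite dot_plus, dot_scal. destruct (Nat.eq_dec i K) as [->|Hne].
  - unfold al. field. auto.
  - rewrite Hv0, Hyp; auto; try lia. ring.
Qed.

Lemma realize n m a : extreme_pts_aff_indep n m a ->
  forall y, exists x s, forall i, (i < m)%nat -> Eb n m a i = true -> dot n (a i) x + s = y i.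
Proof.
  intros Hind y.
  set (Bm := fun i k => if Nat.ltb k n then a i k else 1).
  assert (Hdot : forall i v, dot (S n) (Bm i) v = dot n (a i) v + v n).
  { intros i v. unfold dot. simpl. unfold Bm at 2. rewrite Nat.ltb_irrefl. rewrite Rmult_1_l. f_equal.
    apply sumR_ext. intros k Hk. unfold Bm. apply Nat.ltb_lt in Hk. rewrite Hk. auto. }
  destruct (solve_rows (S n) m Bm (Eb n m a)) with (K := m) (y := y) as [v Hv].
  - intros mu Hmu Hk. apply Hind.
    + intros i Hi Hne. apply Hmu; auto. unfold Eb. destruct (excluded_middle_informative (extremal n m a i)); [contradiction|auto].
    + assert (H := Hk n ltac:(lia)). rewrite <- H. apply sumR_ext. intros i Hi. unfold Bm. rewrite Nat.ltb_irrefl. ring.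
    + intros k Hkn. rewrite <- (Hk k ltac:(lia)). apply sumR_ext. intros i Hi. unfold Bm. apply Nat.ltb_lt in Hkn. rewrite Hkn. auto.
  - exists v, (v n). intros i Hi HE. rewrite <- Hdot. apply Hv; auto.
Qed.

Lemma sage_nns n m a c : C_SAGE n m a c -> C_NNS n m a c.
Proof.
  intros [cs [Hage Hsum]] x. unfold Sig.
  rewrite (sumR_ext m _ (fun i => sumR m (fun k => cs k i * exp (dot n (a i) x)))).
  - rewrite <- sumR_swap. apply sumR_nonneg. intros k Hk. destruct (Hage k Hk) as [Hnn _]. apply Hnn.
  - intros i Hi. rewrite Hsum by auto. rewrite sumR_scal_r. auto.
Qed.

Lemma dot_comb n m a x lam j : vec_eq n (a j) (fun r => sumR m (fun k => lam k * a k r)) ->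
  dot n (a j) x = sumR m (fun k => lam k * dot n (a k) x).
Proof.
  intros H. unfold dot. rewrite (sumR_ext n _ (fun r => sumR m (fun k => lam k * (a k r * x r)))).
  - rewrite sumR_swap. apply sumR_ext. intros k Hk. rewrite sumR_scal. auto.
  - intros r Hr. rewrite H by auto. rewrite <- sumR_scal_r. apply sumR_ext. intros; ring.
Qed.

Lemma nns_sage n m a c : extreme_pts_aff_indep n m a ->
  (forall i, (i < m)%nat -> ~ extremal n m a i -> c i <= 0) -> C_NNS n m a c -> C_SAGE n m a c.
Proof.
  intros Hind Hc Hnns.
  set (Ebm := Eb n m a).
  assert (HEb : forall i, Ebm i = true <-> extremal n m a i).
  { intros i. unfold Ebm, Eb. destruct (excluded_middle_informative (extremal n m a i)); split; auto; discriminate. }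
  assert (Hch : forall j, exists L : nat -> R, (forall k, 0 <= L k) /\ ((j < m)%nat ->
     (forall k, (k < m)%nat -> Ebm k = false -> L k = 0) /\ sumR m L = 1 /\ vec_eq n (a j) (fun r => sumR m (fun k => L k * a k r)))).
  { intros j. destruct (classic (j < m)%nat) as [Hj|Hj].
    - destruct (hull n m a j Hj) as [th [H1 [H2 [H3 H4]]]]. exists th. auto.
    - exists (fun _ => 0). split; [intros; lra| intros; contradiction]. }
  destruct (choice _ Hch) as [lam Hlam].
  set (d := fun j => if andb (Nat.ltb j m) (negb (Ebm j)) then - c j else 0).
  assert (Hl : forall j i, 0 <= lam j i) by (intros j i; apply (Hlam j)).
  assert (Hs : forall j, (j < m)%nat -> sumR m (lam j) = 1) by (intros j Hj; apply (Hlam j); auto).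
  assert (Hd : forall j, 0 <= d j).
  { intros j. unfold d. destruct (Nat.ltb j m) eqn:E1; destruct (Ebm j) eqn:E; simpl; try lra.
    apply Nat.ltb_lt in E1. assert (c j <= 0); [|lra]. apply Hc; auto. intros Hx. apply HEb in Hx. congruence. }
  assert (Hsupp : forall j k, (j < m)%nat -> (k < m)%nat -> lam j k <> 0 -> Ebm k = true).
  { intros j k Hj Hk Hne. destruct (Ebm k) eqn:E; auto. exfalso. apply Hne. apply (Hlam j); auto. }
  assert (Hcomb : forall j x, (j < m)%nat -> dot n (a j) x = sumR m (fun k => lam j k * dot n (a k) x)).
  { intros j x Hj. apply dot_comb. apply (Hlam j); auto. }
  assert (Hnn : forall z, (forall i, (i < m)%nat -> Ebm i = true -> 0 < z i) -> (forall i, (i < m)%nat -> Ebm i = false -> z i = 0) ->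
            0 <= hfun m c d lam z).
  { intros z Hpos Hzero. destruct (realize n m a Hind (fun i => ln (z i))) as [x [s Hx]].
    assert (E : hfun m c d lam z = exp s * Sig n m a c x).
    { unfold hfun, Sig. rewrite <- sumR_minus, <- sumR_scal. apply sumR_ext. intros i Hi.
      unfold d. destruct (Ebm i) eqn:EE; simpl.
      - replace (andb (Nat.ltb i m) false) with false by (destruct (Nat.ltb i m); auto).
        assert (Hzi := Hpos i Hi EE). assert (Hxi := Hx i Hi EE).
        rewrite <- (exp_ln (z i)) at 1 by auto. rewrite <- Hxi, exp_plus. ring.
      - assert (Hlt := Hi). apply Nat.ltb_lt in Hlt. rewrite Hlt. simpl. rewrite (Hzero i Hi EE).
        rewrite Gt_pos_form.
        2:{ intros k Hk Hne. apply Hpos; auto. apply (Hsupp i k); auto. }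
        rewrite (Hcomb i x Hi).
        rewrite (sumR_ext m (fun k => lam i k * dot n (a k) x) (fun k => lam i k * ln (z k) - s * lam i k)).
        + rewrite sumR_minus, sumR_scal, (Hs i Hi). replace (exp s * (c i * exp (sumR m (fun k => lam i k * ln (z k)) - s * 1)))
            with (c i * (exp s * exp (sumR m (fun k => lam i k * ln (z k)) - s * 1))) by ring.
          rewrite <- exp_plus. replace (s + (sumR m (fun k => lam i k * ln (z k)) - s * 1)) with (sumR m (fun k => lam i k * ln (z k))) by ring.
          ring.
        + intros k Hk. destruct (Req_EM_T (lam i k) 0) as [Z|Z]. { rewrite Z. ring. }
          assert (Ek := Hsupp i k Hi Hk Z). rewrite <- (Hx k Hk Ek). ring. }
    rewrite E. apply Rmult_le_pos; [left; apply exp_pos| apply Hnns]. }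
  destruct (core m Ebm c d lam Hl Hs Hd Hnn) as [ell [He1 [He2 [He3 He4]]]].
  set (ellN := fun j i => if Ebm j then 0 else ell j i).
  set (cs := fun k i => if Ebm k then (if Nat.eq_dec i k then c k - sumR m (fun j => ellN j k) else 0)
                        else ((if Nat.eq_dec i k then c k else 0) + ell k i)).
  assert (HSle : forall k, (k < m)%nat -> Ebm k = true -> sumR m (fun j => ellN j k) <= c k).
  { intros k Hk HE. eapply Rle_trans; [|apply (He3 k Hk HE)]. apply sumR_le. intros j Hj. unfold ellN.
    destruct (Ebm j); [apply He1|lra]. }
  exists cs. split.
  - intros k Hk. destruct (Ebm k) eqn:EK.
    + assert (Hcs : forall i, 0 <= cs k i).
      { intros i. unfold cs. rewrite EK. destruct (Nat.eq_dec i k) as [->|]; [assert (H := HSle k Hk EK); lra|lra]. }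
      split.
      * intros x. unfold Sig. apply sumR_nonneg. intros i Hi. apply Rmult_le_pos; [apply Hcs|left; apply exp_pos].
      * intros i Hi Hne. apply Hcs.
    + split.
      * intros x. unfold Sig.
        rewrite (sumR_ext m _ (fun i => (if Nat.eq_dec i k then c k * exp (dot n (a k) x) else 0) + ell k i * exp (dot n (a i) x))).
        2:{ intros i Hi. unfold cs. rewrite EK. destruct (Nat.eq_dec i k) as [->|]; ring. }
        rewrite sumR_plus, sumR_point by auto.
        assert (H := He4 k Hk (fun i Hi Hne => Hsupp k i Hk Hi Hne) (fun i => dot n (a i) x)).
        cbv beta in H. rewrite <- (Hcomb k x Hk) in H.
        unfold d in H. assert (Hlt := Hk). apply Nat.ltb_lt in Hlt. rewrite Hlt, EK in H. simpl in H. lra.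
      * intros i Hi Hne. unfold cs. rewrite EK. destruct (Nat.eq_dec i k); [congruence|]. assert (H := He1 k i). lra.
  - intros i Hi. destruct (Ebm i) eqn:EI.
    + rewrite (sumR_ext m _ (fun k => (if Nat.eq_dec k i then c i - sumR m (fun j => ellN j i) else 0) + ellN k i)).
      * rewrite sumR_plus, sumR_point by auto. ring.
      * intros k Hk. unfold cs, ellN. destruct (Ebm k) eqn:EK;
        destruct (Nat.eq_dec i k) as [Hik|Hne1]; destruct (Nat.eq_dec k i) as [Hki|Hne2]; try lia;
        try (subst k; try congruence; ring); ring.
    + rewrite (sumR_ext m _ (fun k => if Nat.eq_dec k i then c i else 0)).
      * rewrite sumR_point by auto. auto.
      * intros k Hk. unfold cs. rewrite (He2 k i EI). destruct (Ebm k) eqn:EK;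
        destruct (Nat.eq_dec i k) as [Hik|Hne1]; destruct (Nat.eq_dec k i) as [Hki|Hne2]; try lia;
        try (subst k; try congruence; ring); ring.
Qed.

Theorem mainTheorem8 (n m : nat) (a : nat -> nat -> R) :
  distinct_cols n m a ->
  extreme_pts_aff_indep n m a ->
  forall c : nat -> R,
    (forall i, (i < m)%nat -> ~ extremal n m a i -> c i <= 0) ->
    (C_SAGE n m a c <-> C_NNS n m a c).
Proof.
  intros _ Hind c Hc. split.
  - apply sage_nns.
  - apply nns_sage; auto.
Qed.
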